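(* There is a constant $\varepsilon_0\in(0,1)$ such that for every constant $\varepsilon\in(0,\varepsilon_0)$ the following holds. Consider the NSGA-II with population size $N=n+1$ optimizing \textsc{OneMinMax}, where the offspring population is generated by applying one-bit mutation once to each individual of $P_t$. If $|f(P_t)|\le(1-\varepsilon)(n+1)$, then, conditional on $P_t$, with probability at least $1-\exp(-\Omega(n))$ (the implicit constant depending only on $\varepsilon$, and $n$ sufficiently large), $$|f(R_t)|\le\left(1-\tfrac{1}{10}\varepsilon\left(\tfrac15\varepsilon-\tfrac2n\right)^{5/\varepsilon}\right)(n+1).$$
   Context: Search space $\{0,1\}^n$; objective $f=(f_1,f_2)$, both maximized. Populations are multisets of bit strings; for a population $P$, $f(P)=\{f(x):x\in P\}$. In iteration $t$ of the NSGA-II, $P_t$ is the parent population of size $N$, $Q_t$ the offspring population of size $N$ (here: one offspring of each individual of $P_t$, created independently by one-bit mutation, which flips exactly one uniformly random bit), and $R_t=P_t\cup Q_t$ (multiset union). \textsc{OneMinMax}: $f(x)=(n-\sum_{i=1}^n x_i,\ \sum_{i=1}^n x_i)$; its Pareto front is $\{(k,n-k):k\in\{0,\dots,n\}\}$, of size $n+1$. *)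

(* Defs.v *)
From Stdlib Require Import Reals.
From mathcomp Require Import all_boot.
Set Implicit Arguments. Unset Strict Implicit. Unset Printing Implicit Defensive.

Definition bits (n : nat) := {ffun 'I_n -> bool}.

Definition ones n (x : bits n) : nat := #|[set i | x i]|.

Definition oneminmax n (x : bits n) : nat * nat := (n - ones x, ones x).

Definition flip n (x : bits n) (i : 'I_n) : bits n :=
  [ffun j => if j == i then ~~ x j else x j].

(* A population of size N = n+1 (multiset, indexed by positions). *)
Definition population n := {ffun 'I_(n.+1) -> bits n}.

(* The random choices of one-bit mutation: for each parent, the flipped bit. *)
Definition mutchoice n := {ffun 'I_(n.+1) -> 'I_n}.

Definition offspring n (P : population n) (m : mutchoice n) : population n :=
  [ffun k => flip (P k) (m k)].

Definition pop_seq n (P : population n) : seq (bits n) :=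
  [seq P k | k <- enum 'I_(n.+1)].

Definition nfvals n (s : seq (bits n)) : nat := size (undup (map (@oneminmax n) s)).

Definition nfvals_R n (P : population n) (m : mutchoice n) : nat :=
  nfvals (pop_seq P ++ pop_seq (offspring P m)).

Definition prob (T : finType) (E : pred T) : R := Rdiv (INR #|E|) (INR #|T|).

Definition Rleb (a b : R) : bool := if Rle_dec a b then true else false.

(* Main.v *)
Require Import Defs.
From Stdlib Require Import Reals Lra Lia ZArith.
From mathcomp Require Import all_boot.
From mathcomp Require Import Rstruct.
From mathcomp Require Import zify.
Local Open Scope R_scope.



Lemma iter_plus_const (k : nat) (c : R) : iter k (Rplus c) 0 = INR k * c.
Proof. elim: k => [|k IH]; first by rewrite /= Rmult_0_l.
change (iter k.+1 (Rplus c) 0) with (c + iter k (Rplus c) 0); rewrite IH S_INR; ring. Qed.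

Lemma iter_mult_const (k : nat) (c : R) : iter k (Rmult c) 1 = c ^ k.
Proof. by elim: k => [|k IH] //=; rewrite IH. Qed.

Lemma rsum_const (I : finType) (A : {pred I}) (c : R) :
  \big[Rplus/0]_(i in A) c = INR #|A| * c.
Proof. by rewrite big_const iter_plus_const. Qed.

Section Indep.
Variables I J : finType.
Local Notation T := {ffun I -> J}.

Definition dep (S : {set I}) (G : T -> R) :=
  forall f g : T, (forall i, i \in S -> f i = g i) -> G f = G g.

Definition merge (S : {set I}) (f g : T) : T := [ffun i => if i \in S then f i else g i].

Definition swp (S : {set I}) (p : T * T) : T * T := (merge S p.1 p.2, merge S p.2 p.1).

Lemma swpK S : involutive (swp S).
Proof. case=> f g; rewrite /swp /=; congr pair; apply/ffunP=> i; rewrite !ffunE;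
 by case: (i \in S). Qed.

Lemma indep S G H : dep S G -> dep (~: S) H ->
  \big[Rplus/0]_(f : T) (G f * H f) * INR #|T| = \big[Rplus/0]_(f : T) (G f) * \big[Rplus/0]_(f : T) (H f).
Proof.
move=> dG dH.
have E1 : \big[Rplus/0]_(f : T) (G f) * \big[Rplus/0]_(f : T) (H f) =
          \big[Rplus/0]_(p : T * T) (G (merge S p.1 p.2) * H (merge S p.1 p.2)).
  rewrite big_distrl /=.
  under eq_bigr do rewrite big_distrr /=.
  rewrite pair_big /=; apply: eq_bigr => [[f g]] _ /=.
  congr Rmult.
  - by apply: dG => i iS; rewrite ffunE iS.
  - by apply: dH => i; rewrite inE => iS; rewrite ffunE (negbTE iS).
rewrite E1 (reindex_inj (can_inj (swpK S))) /=.
have -> : \big[Rplus/0]_(p : T * T) (G (merge S (swp S p).1 (swp S p).2) * H (merge S (swp S p).1 (swp S p).2)) =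
   \big[Rplus/0]_(p | xpredT p.1 && xpredT p.2) (fun f g : T => G f * H f) p.1 p.2.
  apply: eq_bigr => [[f g]] _ /=.
  have -> : merge S (merge S f g) (merge S g f) = f by apply/ffunP=> i; rewrite !ffunE; case: (i \in S).
  done.
rewrite -(pair_big xpredT xpredT (fun f g : T => G f * H f)) /=.
rewrite big_distrl /=; apply: eq_bigr => f _.
rewrite rsum_const Rmult_comm; congr (INR _ * _); apply: eq_card => x. Qed.

Definition Ex (G : T -> R) := \big[Rplus/0]_(f : T) G f / INR #|T|.

Lemma Ex_indep S G H : (0 < #|T|)%N -> dep S G -> dep (~: S) H ->
  Ex (fun f => G f * H f) = Ex G * Ex H.
Proof.
move=> T0 dG dH; rewrite /Ex.
have P : INR #|T| <> 0 by apply: not_0_INR; lia.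
have E := @indep S G H dG dH.
rewrite (_ : forall a b, a / INR #|T| * (b / INR #|T|) = a * b / (INR #|T| * INR #|T|)); last by move=> a b; field.
rewrite -E; field; done.
Qed.

Lemma Ex_prod (K : eqType) (s : seq K) (S : K -> {set I}) (Y : K -> T -> R) :
  (0 < #|T|)%N -> uniq s -> (forall k, dep (S k) (Y k)) ->
  (forall k l i, k \in s -> l \in s -> k != l -> i \in S k -> i \in S l -> False) ->
  Ex (fun f => \big[Rmult/1]_(k <- s) Y k f) = \big[Rmult/1]_(k <- s) Ex (Y k).
Proof.
move=> T0; elim: s => [|k s IH] /= Us dY dis.
  rewrite big_nil /Ex.
  under eq_bigr do rewrite big_nil.
  rewrite rsum_const /Rdiv Rmult_1_r Rinv_r //.
  have -> : #|(fun _ : T => true)| = #|T| by apply: eq_card.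
  apply: not_0_INR; lia.
case/andP: Us => ks Us.
rewrite big_cons.
have -> : Ex (fun f => \big[Rmult/1]_(j <- k :: s) Y j f) = Ex (fun f => Y k f * \big[Rmult/1]_(j <- s) Y j f).
  by rewrite /Ex; under eq_bigr do rewrite big_cons.
have -> : Ex (fun f => Y k f * \big[Rmult/1]_(j <- s) Y j f) =
          Ex (Y k) * Ex (fun f => \big[Rmult/1]_(j <- s) Y j f).
  apply: (@Ex_indep (S k)) => // f g fg.
  apply: eq_big_seq => j js.
  apply: dY => i ij; apply: fg; rewrite inE; apply/negP => ik.
  apply: (dis k j i) => //; first by rewrite inE eqxx.
    by rewrite inE js orbT.
  by apply/eqP => ekj; move: ks; rewrite ekj js.
rewrite IH //.
by move=> k1 l i k1s ls; apply: dis; rewrite inE ?k1s ?ls orbT.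
Qed.
End Indep.
Arguments dep {I J}.
Arguments Ex {I J}.

Lemma card_family_prod (aT rT : finType) (F : aT -> pred rT) :
  #|[set f : {ffun aT -> rT} | [forall x, F x (f x)]]| = (\prod_(x : aT) #|F x|)%N.
Proof.
have -> : #|[set f : {ffun aT -> rT} | [forall x, F x (f x)]]| = #|(family F : simpl_pred {ffun aT -> rT})|.
  apply: eq_card => f; rewrite inE; apply/forallP/familyP => H x; by have := H x.
rewrite card_family.
rewrite -big_enum /=.
by rewrite foldrE big_map.
Qed.

Lemma ones_le n (x : bits n) : (ones x <= n)%N.
Proof. by rewrite /ones; apply: leq_trans (max_card _) _; rewrite card_ord. Qed.

Lemma ones_flip n (x : bits n) i :
  ones (flip x i) = if x i then (ones x).-1 else (ones x).+1.
Proof.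
rewrite /ones.
case xi: (x i).
- have -> : [set j | flip x i j] = [set j | x j] :\ i.
    apply/setP => j; rewrite !inE ffunE; case: (eqVneq j i) => [->|]; by rewrite ?xi.
  by rewrite [in RHS](cardsD1 i) inE xi.
- have -> : [set j | flip x i j] = i |: [set j | x j].
    apply/setP => j; rewrite !inE ffunE; case: (eqVneq j i) => [->|]; by rewrite ?xi.
  by rewrite cardsU1 inE xi.
Qed.

Section Pop.
Variable n : nat.
Variable P : population n.
Local Notation T := (mutchoice n).

Definition ks (j : 'I_(n.+1)) := ones (P j).
Definition cnt (w : nat) := #|[set j | ks j == w]|.
Definition present (w : nat) := (0 < cnt w)%N.
Definition Aev (v : nat) (m : T) :=
  [forall j, ((ks j == v.-1) ==> P j (m j)) && ((ks j == v.+1) ==> ~~ P j (m j))].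
Definition Sv (v : nat) := [set j | (ks j == v.-1) || (ks j == v.+1)].
Definition Yv (v : nat) (m : T) : R := if Aev v m then / 2 else 1.

Lemma notpresent v j : ~~ present v -> ks j != v.
Proof.
rewrite /present -leqNgt leqn0 => /eqP /cards0_eq /setP /(_ j).
by rewrite !inE => ->.
Qed.

Lemma Aev_unfilled v m : (0 < v)%N -> ~~ present v -> Aev v m ->
  forall j, ones (offspring P m j) != v.
Proof.
move=> v0 np /forallP A j; have := A j; have := @notpresent v j np.
rewrite /offspring ffunE ones_flip /ks.
case Pj: (P j (m j)) => /= nv.
- have h1 : (0 < ones (P j))%N.
    rewrite /ones; apply/card_gt0P; exists (m j); by rewrite inE.
  case/andP => _ H; apply/negP => /eqP e; move: H.
  have -> : ones (P j) == v.+1 by apply/eqP; lia.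
  by [].
- case/andP => H _; apply/negP => /eqP e; move: H.
  have -> : ones (P j) == v.-1 by apply/eqP; lia.
  by [].
Qed.

Lemma Yv_dep v : dep (Sv v) (Yv v).
Proof.
move=> f g fg; rewrite /Yv /Aev.
suff -> : [forall j, ((ks j == v.-1) ==> P j (f j)) && ((ks j == v.+1) ==> ~~ P j (f j))] =
  [forall j, ((ks j == v.-1) ==> P j (g j)) && ((ks j == v.+1) ==> ~~ P j (g j))] by [].
apply: eq_forallb => j.
case: (boolP (j \in Sv v)) => [/fg -> //|].
by rewrite inE negb_or => /andP [/negbTE -> /negbTE ->].
Qed.

Lemma Sv_disj v w i : (0 < v)%N -> (0 < w)%N -> v != w ->
  ((v %% 4 < 2) = (w %% 4 < 2))%N -> i \in Sv v -> i \in Sv w -> False.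
Proof.
move=> v0 w0 /eqP vw cl; rewrite !inE => /orP [] /eqP e1 /orP [] /eqP e2;
  move: cl; lia.
Qed.


Lemma prod_le (I : finType) (F G : I -> R) :
  (forall i, 0 <= G i <= F i) -> 0 <= \big[Rmult/1]_i G i <= \big[Rmult/1]_i F i.
Proof.
move=> H; apply: (big_ind2 (fun x y => 0 <= y <= x)) => //; first lra.
move=> x1 x2 y1 y2 [h1 h2] [h3 h4]; split; first by apply: Rmult_le_pos.
by apply: Rmult_le_compat.
Qed.

Lemma pow_le_one (b : R) (k : nat) : 0 <= b <= 1 -> 0 <= b ^ k <= 1.
Proof.
move=> hb; elim: k => [|k IH] /=; first lra.
split; first by apply: Rmult_le_pos; lra.
have : b * b ^ k <= 1 * 1 by apply: Rmult_le_compat; lra.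
lra.
Qed.

Lemma pow_le_mono (b : R) (k M : nat) : 0 <= b <= 1 -> (k <= M)%N -> b ^ M <= b ^ k.
Proof.
move=> hb kM; rewrite -(subnK kM) pow_add.
have := @pow_le_one b (M - k) hb; have := @pow_le_one b k hb => h1 h2.
have : b ^ (M - k) * b ^ k <= 1 * b ^ k by apply: Rmult_le_compat; lra.
lra.
Qed.

Lemma card_T : #|T| = (\prod_(j : 'I_n.+1) #|'I_n|)%N.
Proof.
rewrite -(@card_family_prod _ _ (fun (_ : 'I_n.+1) (_ : 'I_n) => true)).
by apply: eq_card => m; rewrite inE; apply/esym/forallP.
Qed.

Lemma INR_prod (I : finType) (c : I -> nat) :
  INR (\prod_i c i)%N = \big[Rmult/1]_i INR (c i).
Proof. by apply: (big_morph INR mult_INR). Qed.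

Lemma prob_Aev (a M v : nat) : (0 < n)%N -> (a < v)%N -> (v + a < n)%N ->
  (#|Sv v| <= M)%N ->
  (INR a / INR n) ^ M <= INR #|[set m : T | Aev v m]| / INR #|T|.
Proof.
move=> n0 av van SM.
set b := INR a / INR n.
have nR : 0 < INR n by apply: lt_0_INR; lia.
have aR : INR a <= INR n by apply: le_INR; lia.
have hb : 0 <= b <= 1.
  split; first by apply: Rmult_le_pos; [apply: pos_INR| apply: Rlt_le; apply: Rinv_0_lt_compat].
  rewrite /b; apply: (Rmult_le_reg_r (INR n)) => //; rewrite /Rdiv Rmult_assoc Rinv_l; lra.
set F := fun j (x : 'I_n) => ((ks j == v.-1) ==> P j x) && ((ks j == v.+1) ==> ~~ P j x).
have -> : #|[set m : T | Aev v m]| = (\prod_j #|F j|)%N.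
  rewrite -card_family_prod; apply: eq_card => m; by rewrite !inE.
rewrite card_T !INR_prod.
set w := fun j : 'I_n.+1 => if j \in Sv v then b else 1.
have key : forall j, 0 <= INR #|'I_n| * w j <= INR #|F j|.
  move=> j; rewrite card_ord /w inE.
  have hv : v.-1 != v.+1 by apply/eqP; lia.
  case: (eqVneq (ks j) v.-1) => [e1|n1] /=.
  - have -> : #|F j| = ones (P j).
      rewrite /ones; apply: eq_card => x; rewrite inE unfold_in /F e1 eqxx (negbTE hv) /=; by case: (P j x).
    split; first by apply: Rmult_le_pos; lra.
    rewrite /b (_ : INR n * (INR a / INR n) = INR a); last by field; lra.
    apply: le_INR; rewrite -/(ks j) e1; lia.
  case: (eqVneq (ks j) v.+1) => [e2|n2] /=.
  - have -> : #|F j| = (n - ones (P j))%N.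
      have hc : (#|[pred x | P j x]| + #|[predC [pred x | P j x]]| = n)%N by rewrite cardC card_ord.
      have e : #|F j| = #|[predC [pred x | P j x]]|.
        apply: eq_card => x; rewrite !unfold_in /F e2 eqxx /= eq_sym (negbTE hv) /=; by case: (P j x).
      have o : ones (P j) = #|[pred x | P j x]| by apply: eq_card => x; rewrite inE.
      lia.
    split; first by apply: Rmult_le_pos; lra.
    rewrite /b (_ : INR n * (INR a / INR n) = INR a); last by field; lra.
    apply: le_INR; rewrite -/(ks j) e2; lia.
  - have -> : #|F j| = n.
      rewrite -[RHS](card_ord n); apply: eq_card => x; by rewrite unfold_in /F (negbTE n1) (negbTE n2).
    rewrite Rmult_1_r; split; lra.
have := @prod_le _ _ _ key; rewrite big_split /= => [[_ hle]].
have hw : \big[Rmult/1]_j w j = b ^ #|Sv v|.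
  rewrite /w -big_mkcond /= big_const iter_mult_const; congr (b ^ _).
rewrite hw in hle.
have pos : 0 < \big[Rmult/1]_(j : 'I_n.+1) INR #|'I_n|.
  rewrite big_const iter_mult_const card_ord; apply: pow_lt; lra.
have := @pow_le_mono b _ _ hb SM => hm.
apply: (Rmult_le_reg_r (\big[Rmult/1]_(j : 'I_n.+1) INR #|'I_n|)) => //.
set Y := \big[Rmult/1]_(j : 'I_n.+1) INR #|'I_n|.
set X := \big[Rmult/1]_(j : 'I_n.+1) INR #|F j|.
have Ypos : 0 < Y by exact: pos.
have XX : X >= Y * b ^ #|Sv v| by apply: Rle_ge; exact: hle.
have -> : X / Y * Y = X by field; lra.
have : (b ^ #|Sv v| - b ^ M) * Y >= 0 by apply: Rle_ge; apply: Rmult_le_pos; lra.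
nra.
Qed.

Definition gv (w : 'I_n.+1) : nat * nat := ((n - w)%N, (w : nat)).

Lemma gv_inj : injective gv.
Proof. by move=> x y [_ e]; apply: val_inj. Qed.

Lemma present_ex (w : nat) : present w -> exists j, ks j = w.
Proof. rewrite /present => /card_gt0P [j]; rewrite inE => /eqP e; by exists j. Qed.

Lemma nfvals_P_ge : (#|[set w : 'I_n.+1 | present w]| <= nfvals (pop_seq P))%N.
Proof.
rewrite /nfvals cardE -(size_map gv).
apply: uniq_leq_size; first by rewrite (map_inj_uniq gv_inj) enum_uniq.
move=> x /mapP [w]; rewrite mem_enum inE => /present_ex [j ej] ->.
rewrite mem_undup; apply/mapP; exists (P j).
  by rewrite /pop_seq; apply: map_f; rewrite mem_enum.
by rewrite /oneminmax /gv -ej.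
Qed.

Lemma nfvals_R_le (W : {set 'I_n.+1}) (m : T) :
  (forall v : 'I_n.+1, v \in W -> [/\ (0 < v)%N, ~~ present v & Aev v m]) ->
  (nfvals_R P m <= n.+1 - #|W|)%N.
Proof.
move=> HW.
have -> : (n.+1 - #|W| = #|~: W|)%N by have := cardsC W; rewrite card_ord; lia.
rewrite /nfvals_R /nfvals cardE -(size_map gv).
apply: uniq_leq_size; first exact: undup_uniq.
move=> x; rewrite mem_undup => /mapP [y yR ->].
have yn := @ones_le n y.
apply/mapP; exists (inord (ones y)); last first.
  by rewrite /gv /oneminmax inordK.
rewrite mem_enum inE; apply/negP => inW.
have [v0 npv Av] := HW _ inW.
move: yR; rewrite mem_cat => /orP [] /mapP [j _ ey]; subst y.
- by move: (@notpresent _ j npv); rewrite /ks inordK // eqxx.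
- by move: (@Aev_unfilled _ _ v0 npv Av j); rewrite inordK // eqxx.
Qed.

Lemma cnt_sum w : cnt w = (\sum_(j : 'I_n.+1) (ks j == w : nat))%N.
Proof.
rewrite /cnt -sum1_card big_mkcond /=; apply: eq_bigr => j _; rewrite inE.
by case: (ks j == w).
Qed.

Lemma sum_cnt (c : pred 'I_n.+1) (h : 'I_n.+1 -> nat) :
  (forall x y, c x -> c y -> h x = h y -> x = y) ->
  (\sum_(v | c v) cnt (h v) <= n.+1)%N.
Proof.
move=> hinj.
under eq_bigr do rewrite cnt_sum.
rewrite exchange_big /=.
rewrite -[X in (_ <= X)%N](card_ord n.+1) -sum1_card.
apply: leq_sum => j _.
have -> : (\sum_(v | c v) (ks j == h v : nat) = \sum_(v | c v && (ks j == h v)) 1)%N.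
  rewrite big_mkcond [RHS]big_mkcond; apply: eq_bigr => v _.
  by case: (c v); case: (ks j == h v).
rewrite sum1_card; apply/card_le1_eqP => x y /andP [cx /eqP ex] /andP [cy /eqP ey].
by apply: hinj => //; rewrite -ex -ey.
Qed.

Definition Heavy (M : nat) := [set v : 'I_n.+1 | (0 < v)%N && (M < cnt v.-1 + cnt v.+1)%N].

Lemma card_heavy M : (#|Heavy M| * M.+1 <= 2 * n.+1)%N.
Proof.
rewrite -sum_nat_const.
apply: (@leq_trans (\sum_(v in Heavy M) (cnt v.-1 + cnt v.+1))%N).
  by apply: leq_sum => v; rewrite inE => /andP [_ h].
apply: (@leq_trans (\sum_(v : 'I_n.+1 | (0 < v)%N) (cnt v.-1 + cnt v.+1))%N).
  rewrite big_mkcond [X in (_ <= X)%N]big_mkcond /=; apply: leq_sum => v _.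
  rewrite inE; case: (0 < v)%N => //=; by case: (M < _)%N.
rewrite big_split /= mul2n -addnn; apply: leq_add.
- apply: sum_cnt => x y /= x0 y0 e; apply: val_inj; change (nat_of_ord x = nat_of_ord y); lia.
- apply: sum_cnt => x y /= _ _ e; apply: val_inj; change (nat_of_ord x = nat_of_ord y); lia.
Qed.

Definition Cand (a M : nat) := [set v : 'I_n.+1 | [&& ~~ present v, (a < v)%N, (v + a < n)%N &
   (cnt v.-1 + cnt v.+1 <= M)%N]].

Lemma card_small_lo (a : nat) : (#|[set v : 'I_n.+1 | (v <= a)%N]| <= a.+1)%N.
Proof.
rewrite cardE -(size_map val) -[X in (_ <= X)%N](size_iota 0 a.+1).
apply: uniq_leq_size; first by rewrite (map_inj_uniq val_inj) enum_uniq.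
move=> x /mapP [v]; rewrite mem_enum inE => va ->; rewrite mem_iota /=; lia.
Qed.

Lemma card_small_hi (a : nat) : (#|[set v : 'I_n.+1 | (n <= v + a)%N]| <= a.+1)%N.
Proof.
rewrite cardE -(size_map (fun v : 'I_n.+1 => n - v)%N) -[X in (_ <= X)%N](size_iota 0 a.+1).
apply: uniq_leq_size.
  rewrite map_inj_in_uniq ?enum_uniq // => x y; rewrite !mem_enum !inE => hx hy e.
  apply: val_inj => /=; have := ltn_ord x; have := ltn_ord y; lia.
move=> x /mapP [v]; rewrite mem_enum inE => va ->; rewrite mem_iota /=; lia.
Qed.

Lemma card_missing (a M : nat) :
  (#|[set v : 'I_n.+1 | ~~ present v]| <= #|Cand a M| + a.+1 + a.+1 + #|Heavy M|)%N.
Proof.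
set A := [set v : 'I_n.+1 | (v <= a)%N]; set B := [set v : 'I_n.+1 | (n <= v + a)%N].
have sub : [set v : 'I_n.+1 | ~~ present v] \subset Cand a M :|: A :|: B :|: Heavy M.
  apply/subsetP => v; rewrite !inE => npv; rewrite npv /=.
  case: (leqP v a) => va; first by rewrite orbT.
  case: (leqP n (v + a)) => vb; first by rewrite orbT.
  case: (leqP (cnt v.-1 + cnt v.+1) M) => h //=.
  by rewrite andbT; apply: leq_ltn_trans va.
apply: (leq_trans (subset_leq_card sub)).
have := cardsU (Cand a M :|: A :|: B) (Heavy M); have := cardsU (Cand a M :|: A) B;
have := cardsU (Cand a M) A; have := card_small_lo a; have := card_small_hi a.
rewrite -/A -/B; lia.
Qed.

Lemma rsum_if (I : finType) (A : pred I) (x y : R) :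
  \big[Rplus/0]_(i : I) (if A i then x else y) =
  INR #|[set i | A i]| * x + INR #|[set i | ~~ A i]| * y.
Proof.
rewrite (bigID A) /=.
have -> : \big[Rplus/0]_(i | A i) (if A i then x else y) = \big[Rplus/0]_(i in [set i | A i]) x.
  rewrite [RHS]big_mkcond [LHS]big_mkcond; apply: eq_bigr => i _; rewrite inE; by case: (A i).
have -> : \big[Rplus/0]_(i | ~~ A i) (if A i then x else y) = \big[Rplus/0]_(i in [set i | ~~ A i]) y.
  rewrite [RHS]big_mkcond [LHS]big_mkcond; apply: eq_bigr => i _; rewrite inE; by case: (A i).
by rewrite !rsum_const.
Qed.

Lemma cardT_pos : (0 < n)%N -> (0 < #|T|)%N.
Proof. move=> n0; apply/card_gt0P; by exists [ffun _ => Ordinal n0]. Qed.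

Lemma Ex_Yv v : (0 < n)%N ->
  Ex (Yv v) = 1 - INR #|[set m : T | Aev v m]| / INR #|T| / 2.
Proof.
move=> n0; rewrite /Ex /Yv rsum_if.
have := cardsC [set m : T | Aev v m].
have -> : #|~: [set m : T | Aev v m]| = #|[set m : T | ~~ Aev v m]|.
  by apply: eq_card => m; rewrite !inE.
move=> e; rewrite -e plus_INR.
have : 0 < INR #|T| by apply: lt_0_INR; apply/ltP; apply: cardT_pos.
rewrite -e plus_INR => h.
move: h; set x := INR #|[set i | Aev v i]|; set y := INR #|[set i | ~~ Aev v i]| => h.
field; lra.
Qed.

Lemma Yv_ge0 v m : 0 <= Yv v m.
Proof. rewrite /Yv; case: (Aev v m); lra. Qed.

Lemma prod_seq_const (K : Type) (r : seq K) (c : R) :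
  \big[Rmult/1]_(k <- r) c = c ^ size r.
Proof. by elim: r => [|x r IH]; rewrite ?big_nil ?big_cons ?IH. Qed.

Lemma prod_Yv (V : {set 'I_n.+1}) (m : T) :
  \big[Rmult/1]_(v <- enum V) Yv v m = (/ 2) ^ #|[set v in V | Aev v m]|.
Proof.
rewrite big_enum /= -iter_mult_const -big_const.
rewrite [LHS]big_mkcond [RHS]big_mkcond; apply: eq_bigr => v _; rewrite inE /Yv.
by case: (v \in V); case: (Aev v m).
Qed.

Lemma rsum_le (I : finType) (F G : I -> R) :
  (forall i, F i <= G i) -> \big[Rplus/0]_i F i <= \big[Rplus/0]_i G i.
Proof.
move=> H; apply: (big_ind2 (fun x y => x <= y)) => //; first lra.
by move=> x1 x2 y1 y2 h1 h2; apply: Rplus_le_compat.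
Qed.

Lemma bad_bound (V : {set 'I_n.+1}) (a M k : nat) :
  (0 < n)%N ->
  (forall v, v \in V -> [/\ (a < v)%N, (v + a < n)%N & (#|Sv v| <= M)%N]) ->
  (forall v w, v \in V -> w \in V -> (v %% 4 < 2)%N = (w %% 4 < 2)%N) ->
  INR #|[set m : T | (#|[set v in V | Aev v m]| < k)%N]| / INR #|T| <=
    2 ^ k * (1 - (INR a / INR n) ^ M / 2) ^ #|V|.
Proof.
move=> n0 HV Hcl.
set p := (INR a / INR n) ^ M.
have T0 := cardT_pos n0.
have TR : 0 < INR #|T| by apply: lt_0_INR; apply/ltP.
set Z := fun m : T => \big[Rmult/1]_(v <- enum V) Yv v m.
have EZ : Ex Z = \big[Rmult/1]_(v <- enum V) Ex (Yv v).
  apply: (@Ex_prod _ _ _ (enum V) Sv Yv T0 (enum_uniq _) Yv_dep).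
  move=> v w i; rewrite !mem_enum => vV wV vw iv iw.
  have [av _ _] := HV v vV; have [aw _ _] := HV w wV.
  apply: (@Sv_disj v w i) => //; [lia | lia | exact: Hcl].
have Eb : \big[Rmult/1]_(v <- enum V) Ex (Yv v) <= (1 - p / 2) ^ #|V|.
  rewrite cardE -prod_seq_const.
  have [] : 0 <= \big[Rmult/1]_(v <- enum V) Ex (Yv v) <= \big[Rmult/1]_(v <- enum V) (1 - p / 2);
    last by [].
  rewrite big_seq [X in _ <= _ <= X]big_seq.
  apply: (big_ind2 (fun x y => 0 <= x <= y)); first lra.
    move=> x1 x2 y1 y2 [h1 h2] [h3 h4]; split; first by apply: Rmult_le_pos.
    by apply: Rmult_le_compat.
  move=> v; rewrite mem_enum => vV.
  have [av van SM] := HV v vV.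
  have hp := @prob_Aev a M v n0 av van SM.
  have hle : INR #|[set m : T | Aev v m]| <= INR #|T|.
    apply: le_INR; apply/leP; apply: max_card.
  have hq : INR #|[set m : T | Aev v m]| / INR #|T| <= 1.
    apply: (Rmult_le_reg_r (INR #|T|)) => //; rewrite /Rdiv Rmult_assoc Rinv_l; lra.
  rewrite Ex_Yv //; fold p in hp; lra.
have Mk : INR #|[set m : T | (#|[set v in V | Aev v m]| < k)%N]| * (/ 2) ^ k <=
          \big[Rplus/0]_(m : T) Z m.
  apply: (@Rle_trans _ (\big[Rplus/0]_(m : T)
       (if (#|[set v in V | Aev v m]| < k)%N then (/ 2) ^ k else 0))).
    rewrite rsum_if Rmult_0_r Rplus_0_r; right; done.
  apply: rsum_le => m; rewrite /Z prod_Yv.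
  case: ltnP => h.
    apply: pow_le_mono; [lra | lia].
  apply: pow_le; lra.
have inv2 : (/ 2) ^ k * 2 ^ k = 1 by rewrite -Rpow_mult_distr Rinv_l ?pow1 //; lra.
have p2 : 0 < 2 ^ k by apply: pow_lt; lra.
have : INR #|[set m : T | (#|[set v in V | Aev v m]| < k)%N]| <= 2 ^ k * \big[Rplus/0]_(m : T) Z m.
  have := Rmult_le_compat_r (2 ^ k) _ _ (Rlt_le _ _ p2) Mk.
  by rewrite Rmult_assoc inv2 Rmult_1_r Rmult_comm.
move: EZ; rewrite /Ex => EZ h.
apply: (Rle_trans _ (2 ^ k * (\big[Rplus/0]_(m : T) Z m / INR #|T|))).
  rewrite /Rdiv -Rmult_assoc; apply: Rmult_le_compat_r => //.
  by apply: Rlt_le; apply: Rinv_0_lt_compat.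
apply: Rmult_le_compat_l; first lra.
by rewrite EZ.
Qed.

Lemma card_Sv v : (#|Sv v| <= cnt v.-1 + cnt v.+1)%N.
Proof.
have -> : Sv v = [set j | ks j == v.-1] :|: [set j | ks j == v.+1].
  by apply/setP => j; rewrite !inE.
rewrite cardsU /cnt; lia.
Qed.

Lemma comb_main (a M k : nat) : (0 < n)%N ->
  exists V : {set 'I_n.+1},
    (n.+1 - nfvals (pop_seq P) <= 2 * #|V| + 2 * a.+1 + #|Heavy M|)%N /\
    INR #|[set m : T | ~~ (nfvals_R P m <= n.+1 - k)%N]| / INR #|T| <=
      2 ^ k * (1 - (INR a / INR n) ^ M / 2) ^ #|V|.
Proof.
move=> n0.
have hmiss := card_missing a M.
set C := Cand a M; set B := [set v : 'I_n.+1 | (v %% 4 < 2)%N].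
have hC := cardsID B C.
have hpres := nfvals_P_ge.
have hcompl : (#|[set w : 'I_n.+1 | present w]| + #|[set v : 'I_n.+1 | ~~ present v]| = n.+1)%N.
  rewrite -[in RHS](card_ord n.+1) -(cardsC [set w : 'I_n.+1 | present w]).
  apply/eqP; rewrite eqn_add2l; apply/eqP; apply: eq_card => x; by rewrite !inE.
have gen : forall V : {set 'I_n.+1}, V \subset C ->
    (forall v w, v \in V -> w \in V -> (v %% 4 < 2)%N = (w %% 4 < 2)%N) ->
    INR #|[set m : T | ~~ (nfvals_R P m <= n.+1 - k)%N]| / INR #|T| <=
      2 ^ k * (1 - (INR a / INR n) ^ M / 2) ^ #|V|.
  move=> V VC Vcl.
  have HV : forall v, v \in V -> [/\ (a < v)%N, (v + a < n)%N & (#|Sv v| <= M)%N].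
    move=> v /(subsetP VC); rewrite inE => /and4P [_ h1 h2 h3]; split => //.
    exact: leq_trans (card_Sv v) h3.
  apply: (Rle_trans _ _ _ _ (@bad_bound V a M k n0 HV Vcl)).
  apply: Rmult_le_compat_r.
    by apply: Rlt_le; apply: Rinv_0_lt_compat; apply: lt_0_INR; apply/ltP; apply: cardT_pos.
  apply: le_INR; apply/leP; apply: subset_leq_card; apply/subsetP => m; rewrite !inE.
  move=> hnot; rewrite ltnNge; apply/negP => hk; move/negP: hnot; apply.
  apply: (leq_trans (@nfvals_R_le [set v in V | Aev v m] m _)).
    move=> v; rewrite inE => /andP [vV Av]; have [av _ _] := HV v vV.
    have := subsetP VC v vV; rewrite inE => /and4P [np _ _ _].
    split => //; lia.
  lia.
case: (leqP #|C :\: B| #|C :&: B|) => hle.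
- exists (C :&: B); split.
    clear gen; rewrite -/C in hmiss.
    have e1 : (#|C| <= 2 * #|C :&: B|)%N by lia.
    have e2 : (n.+1 - nfvals (pop_seq P) <= #|[set v : 'I_n.+1 | ~~ present v]|)%N by lia.
    have e3 : (#|[set v : 'I_n.+1 | ~~ present v]| <= 2 * #|C :&: B| + 2 * a.+1 + #|Heavy M|)%N by lia.
    by apply: (leq_trans e2); apply: (leq_trans e3).
  apply: gen; first by apply: subsetIl.
  by move=> v w; rewrite !inE => /andP [_ ->] /andP [_ ->].
- exists (C :\: B); split.
    clear gen; rewrite -/C in hmiss.
    have e1 : (#|C| <= 2 * #|C :\: B|)%N by lia.
    have e2 : (n.+1 - nfvals (pop_seq P) <= #|[set v : 'I_n.+1 | ~~ present v]|)%N by lia.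
    have e3 : (#|[set v : 'I_n.+1 | ~~ present v]| <= 2 * #|C :\: B| + 2 * a.+1 + #|Heavy M|)%N by lia.
    by apply: (leq_trans e2); apply: (leq_trans e3).
  apply: gen; first by apply: subsetDl.
  move=> v w; rewrite !inE => /andP [/negbTE -> _] /andP [/negbTE -> _]; done.
Qed.

End Pop.

Lemma floor_nat (x : R) : 0 <= x -> exists k : nat, INR k <= x < INR k + 1.
Proof.
move=> x0; have [h1 h2] := archimed x.
have z1 : (1 <= up x)%Z.
  have : (0 < up x)%Z by apply: lt_IZR; lra.
  lia.
exists (Z.to_nat (up x - 1)).
rewrite INR_IZR_INZ Z2Nat.id; last lia.
rewrite minus_IZR /=; lra.
Qed.

Lemma exp_pow_nat (x : R) (k : nat) : exp x ^ k = exp (INR k * x).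
Proof.
elim: k => [|k IH]; first by rewrite /= Rmult_0_l exp_0.
change (exp x ^ k.+1) with (exp x * exp x ^ k).
by rewrite IH S_INR Rmult_plus_distr_r Rmult_1_l exp_plus Rmult_comm.
Qed.

Lemma bern (x : R) (M : nat) : 0 <= x -> 1 + INR M * x <= (1 + x) ^ M.
Proof.
move=> x0; elim: M => [|M IH]; first by rewrite /= Rmult_0_l; lra.
change ((1 + x) ^ M.+1) with ((1 + x) * (1 + x) ^ M); rewrite S_INR.
have : 0 <= INR M * x * x by apply: Rmult_le_pos; [apply: Rmult_le_pos; [apply: pos_INR|]|].
nra.
Qed.

Lemma Rpower_le_pow (q y : R) (M : nat) : 0 < q < 1 -> INR M <= y -> Rpower q y <= q ^ M.
Proof.
move=> [q0 q1] My; rewrite -Rpower_pow // /Rpower.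
have : ln q < 0 by rewrite -ln_1; apply: ln_increasing.
move=> lq; have : y * ln q <= INR M * ln q by nra.
move=> h; case: (Rle_lt_or_eq_dec _ _ h) => [h'|->]; last lra.
by apply: Rlt_le; apply: exp_increasing.
Qed.

Lemma INR_subn (x y : nat) : INR x - INR y <= INR (x - y).
Proof.
case: (leqP y x) => h.
- rewrite minus_INR; [lra | apply/leP; exact h].
- have -> : (x - y)%N = 0%N by apply/eqP; rewrite subn_eq0; apply: ltnW.
  have : INR x <= INR y by apply: le_INR; apply/leP; apply: ltnW.
  simpl; lra.
Qed.

Lemma INR_addn (x y : nat) : INR (x + y)%N = INR x + INR y.
Proof. exact: plus_INR. Qed.
Lemma INR_muln (x y : nat) : INR (x * y)%N = INR x * INR y.
Proof. exact: mult_INR. Qed.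

Lemma Rleb_true a b : a <= b -> Defs.Rleb a b.
Proof. by rewrite /Defs.Rleb; case: Rle_dec. Qed.

Theorem lemma10 :
  exists eps0 : R, 0 < eps0 < 1 /\
  forall eps : R, 0 < eps < eps0 ->
  exists c : R, 0 < c /\
  exists n0 : nat, forall n : nat, (n0 <= n)%nat ->
  forall P : population n,
    INR (nfvals (pop_seq P)) <= (1 - eps) * INR (n.+1) ->
    prob (fun m : mutchoice n =>
        Defs.Rleb (INR (nfvals_R P m))
             ((1 - eps / 10 * Rpower (eps / 5 - 2 / INR n) (5 / eps)) * INR (n.+1)))
     >= 1 - exp (- (c * INR n)).
Proof.
exists (1 / 10); split; first lra.
move=> eps [e0 e1].
have ie : 0 < / eps by apply: Rinv_0_lt_compat.
have [M [HM1 HM2]] := floor_nat (5 / eps) (ltac:(rewrite /Rdiv; nra)).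
have eM : 5 < eps * (INR M + 1).
  have : eps * (5 / eps) = 5 by field; lra.
  nra.
have M28 : 28 <= INR M by nra.
set Q0 := Rpower (eps / 10) (5 / eps).
have Q0pos : 0 < Q0 by rewrite /Q0 /Rpower; apply: exp_pos.
have Q0le : Q0 <= 1.
  have := @Rpower_le_pow (eps / 10) (5 / eps) 0 (ltac:(split; lra)) (ltac:(simpl; rewrite /Rdiv; nra)).
  by rewrite /=.
exists (eps * Q0 / 20); split; first by apply: Rmult_lt_0_compat; [nra | lra].
have eQ : 0 < eps * Q0 by nra.
have [N0 [hN1 hN2]] := floor_nat (100 / (eps * Q0)) (ltac:(apply: Rlt_le; apply: Rdiv_lt_0_compat; lra)).
exists N0.+1 => n hn P hD.
have nN : INR N0 + 1 <= INR n by rewrite -S_INR; apply: le_INR; apply/leP.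
have big1 : 100 <= eps * Q0 * INR n.
  have : eps * Q0 * (100 / (eps * Q0)) = 100 by field; lra.
  nra.
have big2 : 100 <= eps * INR n by nra.
have n0 : (0 < n)%N by apply/ltP; apply: INR_lt; simpl; nra.
have nR : 0 < INR n by apply: lt_0_INR; apply/ltP.
have [a [ha1 ha2]] := floor_nat (eps * INR n / 4) (ltac:(nra)).
set q := eps / 5 - 2 / INR n.
have in_ : / INR n * INR n = 1 by field; lra.
have hq1 : eps / 10 <= q.
  rewrite /q; have : 2 / INR n <= eps / 10; last lra.
  apply: (Rmult_le_reg_r (INR n)) => //; rewrite /Rdiv Rmult_assoc in_; nra.
have hq2 : q < 1.
  rewrite /q; have : 0 < 2 / INR n by apply: Rdiv_lt_0_compat; lra.
  lra.
set Q := Rpower q (5 / eps).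
have hQ1 : Q0 <= Q.
  apply: Rle_Rpower_l; [rewrite /Rdiv; nra | lra].
have hQ2 : Q <= 1.
  have := @Rpower_le_pow q (5 / eps) 0 (ltac:(split; lra)) (ltac:(simpl; rewrite /Rdiv; nra)).
  by rewrite /=.
set d := eps / 10 * Q.
have Q0' : 0 <= Q by rewrite /Q /Rpower; apply: Rlt_le; apply: exp_pos.
have [k0 [hk1 hk2]] : exists k0 : nat, INR k0 <= d * INR n.+1 < INR k0 + 1.
  apply: floor_nat; rewrite /d S_INR; nra.
have [V [hV1 hV2]] := @comb_main n P a M k0.+1 n0.
rewrite /prob.
match goal with |- INR #|?E| / _ >= _ => set Ev := E end.
set bad := [set m : mutchoice n | ~~ (nfvals_R P m <= n.+1 - k0.+1)%N].
have hcard : (#|mutchoice n| <= #|Ev| + #|bad|)%N.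
  set A := [set m : mutchoice n | (nfvals_R P m <= n.+1 - k0.+1)%N].
  have -> : bad = ~: A by apply/setP => m; rewrite !inE.
  rewrite -(cardsC A) leq_add2r; apply: subset_leq_card; apply/subsetP => m.
  rewrite inE => hm; rewrite unfold_in /Ev; apply: Rleb_true.
  apply: (Rle_trans _ (INR (n.+1 - k0.+1))); first by apply: le_INR; apply/leP.
  have dle : d <= 1 by rewrite /d; nra.
  have hk : INR k0.+1 = INR k0 + 1 by rewrite S_INR.
  case: (leqP k0.+1 n.+1) => hkn.
    rewrite minus_INR; last by apply/leP.
    have : (1 - d) * INR n.+1 = INR n.+1 - d * INR n.+1 by ring.
    lra.
  have -> : (n.+1 - k0.+1)%N = 0%N by apply/eqP; rewrite subn_eq0; apply: ltnW.
  have : 0 <= INR n.+1 by apply: pos_INR.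
  change (INR 0) with 0; nra.
have TR : 0 < INR #|mutchoice n| by apply: lt_0_INR; apply/ltP; apply: cardT_pos.
set p := (INR a / INR n) ^ M.
have hb0 : 0 <= INR a / INR n by apply: Rmult_le_pos; [apply: pos_INR | apply: Rlt_le; apply: Rinv_0_lt_compat].
have hb1 : INR a / INR n <= 1.
  apply: (Rmult_le_reg_r (INR n)) => //; rewrite /Rdiv Rmult_assoc Rinv_l; nra.
have hp1 : p <= 1 by have := @pow_le_one _ M (conj hb0 hb1); rewrite -/p; lra.
have hp0 : 0 <= p by apply: pow_le.
have hp8 : 8 * Q <= p.
  have hb : 5 / 4 * q <= INR a / INR n.
    rewrite /q; apply: (Rmult_le_reg_r (INR n)) => //.
    rewrite (_ : INR a / INR n * INR n = INR a); last by field; lra.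
    have : (5 / 4 * (eps / 5 - 2 * / INR n)) * INR n = eps * INR n / 4 - 5 / 2 by field; lra.
    rewrite /Rdiv => ->; lra.
  have h1 : (5 / 4 * q) ^ M <= p by apply: pow_incr; split => //; nra.
  rewrite Rpow_mult_distr in h1.
  have h2 : 1 + INR M * (1 / 4) <= (1 + 1 / 4) ^ M by apply: bern; lra.
  have h3 : Q <= q ^ M by apply: Rpower_le_pow => //; lra.
  have h4 : 0 <= q ^ M by apply: pow_le; lra.
  have e54 : 1 + 1 / 4 = 5 / 4 by field.
  rewrite e54 in h2.
  nra.
have hH := @card_heavy n P M.
have hH' : INR #|@Heavy n P M| * (INR M + 1) <= 2 * (INR n + 1).
  have := le_INR _ _ (elimT leP hH); rewrite INR_muln INR_muln !S_INR.
  change (INR 0) with 0; lra.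
have hH2 : INR #|@Heavy n P M| * 5 <= 2 * (INR n + 1) * eps.
  have : 0 <= INR #|@Heavy n P M| by apply: pos_INR.
  nra.
have hV1' : INR n.+1 - INR (nfvals (pop_seq P)) <= 2 * INR #|V| + 2 * (INR a + 1) + INR #|@Heavy n P M|.
  apply: (Rle_trans _ _ _ (INR_subn _ _)).
  have := le_INR _ _ (elimT leP hV1); rewrite !INR_addn !INR_muln !S_INR.
  change (INR 0) with 0; lra.
rewrite S_INR in hD hV1'.
have hVcount : eps * (INR n + 1) / 10 - 2 <= 2 * INR #|V| by nra.
have Vpos : 0 <= INR #|V| by apply: pos_INR.
have s1 : INR #|V| * (8 * Q) <= INR #|V| * p by apply: Rmult_le_compat_l.
have s2 : (eps * (INR n + 1) / 10 - 2) * Q <= 2 * INR #|V| * Q by apply: Rmult_le_compat_r.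
have s3 : eps * INR n * Q0 <= eps * INR n * Q by apply: Rmult_le_compat_l; nra.
have hk : INR k0.+1 <= eps / 10 * Q * (INR n + 1) + 1.
  rewrite S_INR; move: hk1; rewrite /d S_INR; lra.
have expo : INR k0.+1 * 1 + INR #|V| * (- (p / 2)) <= - (eps * Q0 / 20 * INR n).
  move: s1 s2 hVcount Vpos; move: (INR #|V|) => W s1 s2 hVc Wpos.
  clearbody p.
  have -> : INR k0.+1 * 1 + W * - (p / 2) = INR k0.+1 - (W * p) / 2 by rewrite Rmult_1_r; field.
  have -> : - (eps * Q0 / 20 * INR n) = - (eps * INR n * Q0) / 20 by field.
  have t0 : W * (8 * Q) = 8 * (W * Q) by field.
  have t1 : W * p >= 8 * (W * Q) by lra.
  have t2 : 2 * (W * Q) >= eps * INR n * Q / 10 + eps * Q / 10 - 2 * Q.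
    have : (eps * (INR n + 1) / 10 - 2) * Q = eps * INR n * Q / 10 + eps * Q / 10 - 2 * Q by field.
    have : 2 * W * Q = 2 * (W * Q) by field.
    lra.
  have t3 : eps / 10 * Q * (INR n + 1) = eps * INR n * Q / 10 + eps * Q / 10 by field.
  have t4 : 0 <= eps * Q by nra.
  have t5 : eps * INR n * Q0 = eps * Q0 * INR n by field.
  have t6 : eps * Q <= Q by nra.
  lra.
have e2 : 2 <= exp 1 by have := exp_ineq1 1 (ltac:(lra)); lra.
have b1 : 2 ^ k0.+1 <= exp 1 ^ k0.+1 by apply: pow_incr; lra.
have b2 : (1 - p / 2) ^ #|V| <= exp (- (p / 2)) ^ #|V|.
  apply: pow_incr; split; first lra.
  have := exp_ineq1_le (- (p / 2)); lra.
rewrite !exp_pow_nat in b1 b2.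
have hbad : INR #|bad| / INR #|mutchoice n| <= exp (- (eps * Q0 / 20 * INR n)).
  apply: (Rle_trans _ _ _ hV2).
  apply: (Rle_trans _ (exp (INR k0.+1 * 1) * exp (INR #|V| * - (p / 2)))).
    apply: Rmult_le_compat; [apply: pow_le; lra | apply: pow_le; rewrite -/p; lra | exact: b1 | exact: b2].
  rewrite -exp_plus; case: (Rle_lt_or_eq_dec _ _ expo) => [h|->]; last lra.
  by apply: Rlt_le; apply: exp_increasing.
have hc : INR #|mutchoice n| <= INR #|Ev| + INR #|bad| by rewrite -INR_addn; apply: le_INR; apply/leP.
apply: Rle_ge.
have : INR #|Ev| / INR #|mutchoice n| >= 1 - INR #|bad| / INR #|mutchoice n|.
  apply: Rle_ge; apply: (Rmult_le_reg_r (INR #|mutchoice n|)) => //.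
  rewrite Rmult_minus_distr_r Rmult_1_l !(Rmult_assoc _ (/ _)) Rinv_l; lra.
move=> h; apply: (Rle_trans _ (1 - INR #|bad| / INR #|mutchoice n|)); first lra.
exact: (Rge_le _ _ h).
Qed.
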